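(* Let $\psi^+$ be a rooted binary topological tree on $X$ and $\kappa\ge2$. For each internal vertex $v$ of $\psi^+$ fix two taxa $a,b$ with $v=\operatorname{MRCA}(a,b)$, and let $\mathcal S_v$ be the set of linear equations (in the entries of an indeterminate tensor $P$) expressing that every matrix slice of $P_{ab}$, obtained by fixing the indices of all taxa in $X\setminus\operatorname{desc}(v)$, is symmetric, where $P_{ab}$ denotes the marginalization of $P$ over all indices of taxa in $\operatorname{desc}(v)\setminus\{a,b\}$. For leaves $v$ set $\mathcal S_v=\emptyset$. Then the set $\mathcal S=\bigcup_{v}\mathcal S_v$ defines the linear space $L(\psi^+)$ (regardless of which pairs $a,b$ are chosen).
   Context: Consider real $|X|$-way $\kappa\times\cdots\times\kappa$ tensors $P$ with one index per taxon in $X$. For $Y\subseteq X$, $P_Y$ is the marginalization to $Y$; $\psi^+|_Y$ is the induced rooted subtree; a 2-clade is a pair of leaves that are exactly the leaf descendants of some vertex. $L(\psi^+)$ is the linear space of all real tensors $P$ such that for every $Y\subseteq X$ and every 2-clade $\{a,b\}$ of $\psi^+|_Y$, $P_Y$ is invariant under exchanging the $a$ and $b$ indices. $\operatorname{desc}(v)$ is the set of taxa (leaves) descended from $v$, and $\operatorname{MRCA}(a,b)$ is the most recent common ancestor of leaves $a,b$. *)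

(* Defs.v *)
From mathcomp Require Import all_boot all_order all_algebra.
Set Implicit Arguments. Unset Strict Implicit. Unset Printing Implicit Defensive.
Import GRing.Theory Num.Theory.
Local Open Scope ring_scope.

Inductive tree (X : Type) := Leaf of X | Node of tree X & tree X.
Arguments Leaf {X}. Arguments Node {X}.

Fixpoint leaves (X : Type) (t : tree X) : seq X :=
  match t with Leaf x => [:: x] | Node l r => leaves l ++ leaves r end.

Definition tree_on (X : finType) (t : tree X) : Prop :=
  uniq (leaves t) /\ forall x : X, x \in leaves t.

(* "p holds at every vertex" / "at some vertex" (vertices = subtrees) *)
Fixpoint allv (X : Type) (p : tree X -> Prop) (t : tree X) : Prop :=
  p t /\ match t with Leaf _ => True | Node l r => allv p l /\ allv p r end.
Fixpoint exv (X : Type) (p : tree X -> Prop) (t : tree X) : Prop :=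
  p t \/ match t with Leaf _ => False | Node l r => exv p l \/ exv p r end.

Definition is_internal (X : Type) (t : tree X) : bool :=
  if t is Node _ _ then true else false.

Definition desc (X : finType) (v : tree X) : {set X} := [set x in leaves v].

Definition is_mrca (X : finType) (v : tree X) (a b : X) : Prop :=
  a \in leaves v /\ b \in leaves v /\
  match v with
  | Leaf _ => True
  | Node l r => ~~ ((a \in leaves l) && (b \in leaves l)) /\
                ~~ ((a \in leaves r) && (b \in leaves r))
  end.

(* induced rooted subtree psi|_Y (degree-2 vertices suppressed);
   None when Y contains no leaf of t *)
Fixpoint restrict (X : finType) (Y : {set X}) (t : tree X) : option (tree X) :=
  match t with
  | Leaf x => if x \in Y then Some (Leaf x) else None
  | Node l r =>
      match restrict Y l, restrict Y r with
      | Some l', Some r' => Some (Node l' r')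
      | Some l', None => Some l'
      | None, Some r' => Some r'
      | None, None => None
      end
  end.

Definition two_clade (X : finType) (t : tree X) (Y : {set X}) (a b : X) : Prop :=
  a != b /\
  match restrict Y t with
  | Some t' => exv (fun w => perm_eq (leaves w) [:: a; b]) t'
  | None => False
  end.

Definition index (X : finType) (k : nat) := {ffun X -> 'I_k}.
Definition tensor (R : Type) (X : finType) (k : nat) := index X k -> R.

(* marginalization P_Y, viewed as a function of the full index (depends only
   on the coordinates in Y) *)
Definition marg (R : realFieldType) (X : finType) (k : nat)
  (P : tensor R X k) (Y : {set X}) (i : index X k) : R :=
  \sum_(j : index X k | [forall y in Y, j y == i y]) P j.

Definition swap_idx (X : finType) (k : nat) (i : index X k) (a b : X) : index X k :=
  [ffun x => if x == a then i b else if x == b then i a else i x].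

Definition sym_in (R : realFieldType) (X : finType) (k : nat)
  (P : tensor R X k) (Y : {set X}) (a b : X) : Prop :=
  forall i : index X k, marg P Y (swap_idx i a b) = marg P Y i.

Definition inL (R : realFieldType) (X : finType) (k : nat)
  (t : tree X) (P : tensor R X k) : Prop :=
  forall (Y : {set X}) (a b : X), two_clade t Y a b -> sym_in P Y a b.

(* the equations S_v for internal v with chosen pair (a,b): every matrix slice
   of P_ab (marginalize over desc(v)\{a,b}, fix indices outside desc(v)) is
   symmetric, i.e. P_{(X\desc v) u {a,b}} is invariant under a<->b *)
Definition S_v (R : realFieldType) (X : finType) (k : nat)
  (P : tensor R X k) (v : tree X) (a b : X) : Prop :=
  sym_in P (~: desc v :|: [set a; b]) a b.

(* Main.v *)
Require Import Defs.
From mathcomp Require Import all_boot all_order all_algebra.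
Local Open Scope ring_scope.

Set Implicit Arguments. Unset Strict Implicit. Unset Printing Implicit Defensive.
Import GRing.Theory Num.Theory.
Section M.
Variables (R : realFieldType) (X : finType) (k : nat) (P : tensor R X k).

Definition trp (x y u : X) := if u == x then y else if u == y then x else u.

Lemma swapE (i : Defs.index X k) x y u : swap_idx i x y u = i (trp x y u).
Proof. by rewrite /swap_idx ffunE /trp; case: (u == x); case: (u == y). Qed.

Lemma trL x y : trp x y x = y. Proof. by rewrite /trp eqxx. Qed.
Lemma trR x y : trp x y y = x.
Proof. by rewrite /trp eqxx; case: eqP => // ->. Qed.
Lemma trN x y u : u != x -> u != y -> trp x y u = u.
Proof. by rewrite /trp => /negbTE -> /negbTE ->. Qed.
Lemma trK x y u : trp x y (trp x y u) = u.
Proof.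
case: (eqVneq u x) => [->|ux]; first by rewrite trL trR.
case: (eqVneq u y) => [->|uy]; first by rewrite trR trL.
by rewrite !trN.
Qed.

Lemma swapK (i : Defs.index X k) x y : swap_idx (swap_idx i x y) x y = i.
Proof. by apply/ffunP => u; rewrite !swapE trK. Qed.

Lemma swapC (i : Defs.index X k) x y : swap_idx i x y = swap_idx i y x.
Proof.
apply/ffunP => u; rewrite !swapE /trp.
case: (eqVneq u x) => [->|ux]; first by case: (eqVneq x y) => [->|].
by case: (eqVneq u y).
Qed.

Lemma marg_ext (Z : {set X}) (i i' : Defs.index X k) :
  (forall y, y \in Z -> i y = i' y) -> marg P Z i = marg P Z i'.
Proof.
move=> H; rewrite /marg; apply: eq_bigl => j.
apply/forallP/forallP => /= A y; have := A y; case: (boolP (y \in Z)) => //= yZ;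
  by rewrite H.
Qed.

Lemma marg_split (W Z : {set X}) i : W \subset Z ->
  marg P W i = \sum_(j : Defs.index X k | [forall y in W :|: ~: Z, j y == i y]) marg P Z j.
Proof.
move=> WZ; rewrite /marg (exchange_big_dep predT) //=.
rewrite big_mkcond; apply: eq_bigr => j' _.
case: ifP => Cj'.
  pose j0 : Defs.index X k := [ffun y => if y \in Z then j' y else i y].
  rewrite (big_pred1 j0) // => j /=.
  apply/idP/eqP.
    case/andP => /forallP HA /forallP HB; apply/ffunP => y; rewrite ffunE.
    case: ifP => yZ.
      by have := HB y; rewrite yZ /= => /eqP ->.
    by have := HA y; rewrite !inE yZ orbT /= => /eqP.
  move=> ->; apply/andP; split; apply/forallP => y; apply/implyP; rewrite ?inE ffunE.
    case/orP => [yW|yZ]; last by rewrite (negbTE yZ).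
    rewrite (subsetP WZ _ yW).
    by move/forallP: Cj' => /(_ y); rewrite yW.
  by move=> ->.
rewrite big_pred0 // => j /=; apply/negbTE; apply/negP => /andP [/forallP HA /forallP HB].
move/negbT: Cj' => /negP; apply; apply/forallP => y; apply/implyP => yW.
have := HA y; rewrite inE yW /= => /eqP <-.
by have := HB y; rewrite (subsetP WZ _ yW).
Qed.

Lemma push (Z1 Z2 W1 W2 : {set X}) x y :
  (forall i, marg P Z1 (swap_idx i x y) = marg P Z2 i) ->
  W1 \subset Z1 ->
  (forall u, (trp x y u \in Z1) = (u \in Z2)) ->
  (forall u, (trp x y u \in W1) = (u \in W2)) ->
  forall i, marg P W1 (swap_idx i x y) = marg P W2 i.
Proof.
move=> H WZ1 HZ HW i.
have WZ2 : W2 \subset Z2.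
  by apply/subsetP => u; rewrite -HW -HZ => /(subsetP WZ1).
rewrite (marg_split _ WZ1) (marg_split _ WZ2).
rewrite (reindex_inj (h := fun j => swap_idx j x y)); last first.
  by move=> j1 j2 /(congr1 (fun j => swap_idx j x y)); rewrite !swapK.
apply: eq_big => j; last by move=> _; apply: H.
apply/forallP/forallP => A u; apply/implyP => uS.
  have := A (trp x y u); rewrite !swapE trK !inE HW HZ.
  by move: uS; rewrite !inE => -> /=.
have := A (trp x y u); rewrite !inE -HW -HZ trK.
by move: uS; rewrite !inE => -> /=; rewrite !swapE.
Qed.


Lemma trp_mem (A B : {set X}) x y : (x \in A) = (y \in B) -> (y \in A) = (x \in B) ->
  (forall u, u != x -> u != y -> (u \in A) = (u \in B)) ->
  forall u, (trp x y u \in A) = (u \in B).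
Proof.
move=> h1 h2 h3 u.
case: (eqVneq u x) => [->|ux]; first by rewrite trL.
case: (eqVneq u y) => [->|uy]; first by rewrite trR.
by rewrite trN // h3.
Qed.

Definition relm (O : {set X}) x x' := forall i,
  marg P (O :|: [set x]) (swap_idx i x x') = marg P (O :|: [set x']) i.

Lemma rel_refl O x : relm O x x.
Proof.
move=> i; congr marg; apply/ffunP => u; rewrite swapE /trp.
by case: (eqVneq u x) => [->|].
Qed.

Lemma rel_sym O x y : relm O x y -> relm O y x.
Proof. by move=> H i; rewrite -[in RHS](swapK i x y) H swapC. Qed.

Lemma rel_trans O x y z : relm O x y -> relm O y z ->
  x \notin O -> y \notin O -> z \notin O -> relm O x z.
Proof.
move=> H1 H2 xO yO zO i; rewrite -H2 -H1; apply: marg_ext => u.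
rewrite !inE => /orP[uO|/eqP->]; rewrite !swapE; last by rewrite !trL.
have ux : u != x by apply/eqP => e; move: xO; rewrite -e uO.
have uy : u != y by apply/eqP => e; move: yO; rewrite -e uO.
have uz : u != z by apply/eqP => e; move: zO; rewrite -e uO.
by rewrite (trN ux uy) (trN uy uz) (trN ux uz).
Qed.

Lemma sym_swap (Z : {set X}) a b : sym_in P Z a b -> sym_in P Z b a.
Proof. by move=> H i; rewrite swapC H. Qed.

Lemma uniq_cat_neq (l r : seq X) x y : uniq (l ++ r) -> x \in l -> y \in r -> x != y.
Proof.
rewrite cat_uniq => /and3P [_ H _] xl yr; apply/eqP => e; subst.
by move: H => /hasP; apply; exists y.
Qed.

End M.

Section T.
Variables (R : realFieldType) (X : finType) (k : nat) (P : tensor R X k)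
  (ch : tree X -> X * X).

Definition pp (v : tree X) := uniq (leaves v) /\
  (is_internal v -> is_mrca v (ch v).1 (ch v).2) /\
  (is_internal v -> S_v P v (ch v).1 (ch v).2).

Lemma cd l r : pp (Node l r) -> exists c d, [/\ c \in leaves l, d \in leaves r &
  sym_in P (~: desc (Node l r) :|: [set c; d]) c d].
Proof.
case=> _ [/(_ isT) [c1 [d1 H]] /(_ isT) S]; rewrite /S_v in S.
move: c1 d1 H; rewrite /= !mem_cat => /orP[cl|cr] /orP[dl|dr] [H1 H2].
- by move: H1; rewrite cl dl.
- by exists (ch (Node l r)).1, (ch (Node l r)).2.
- exists (ch (Node l r)).2, (ch (Node l r)).1; split => //.
  have -> : [set (ch (Node l r)).2; (ch (Node l r)).1] =
     [set (ch (Node l r)).1; (ch (Node l r)).2] :> {set X} by rewrite setUC.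
  exact: sym_swap.
- by move: H2; rewrite cr dr.
Qed.

Lemma notin_of (O : {set X}) (s : seq X) z :
  (forall u, u \in O -> u \notin s) -> z \in s -> z \notin O.
Proof. by move=> HO zs; apply/negP => /HO; rewrite zs. Qed.

Lemma rel_cd l r c d (O : {set X}) : uniq (leaves (Node l r)) ->
  c \in leaves l -> d \in leaves r ->
  sym_in P (~: desc (Node l r) :|: [set c; d]) c d ->
  (forall u, u \in O -> u \notin leaves (Node l r)) -> relm P O c d.
Proof.
move=> U cl dr S HO.
have cd : c != d := uniq_cat_neq U cl dr.
have cw : c \in leaves (Node l r) by rewrite /= mem_cat cl.
have dw : d \in leaves (Node l r) by rewrite /= mem_cat dr orbT.
have cO := notin_of HO cw; have dO := notin_of HO dw.
move: HO S; set w := Node l r => HO S.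
apply: (push (Z1 := ~: desc w :|: [set c; d]) (Z2 := ~: desc w :|: [set c; d])) => //.
- apply/subsetP => u; rewrite /desc !inE => /orP[/HO -> //|/eqP ->].
  by rewrite eqxx ?orbT.
- by apply: trp_mem => [|| //]; rewrite !inE ?eqxx ?orbT.
- apply: trp_mem => [||u uc ud]; rewrite !inE ?eqxx ?orbT //.
    by rewrite (negbTE cO) (negbTE dO) (negbTE cd) eq_sym (negbTE cd).
  by rewrite (negbTE uc) (negbTE ud).
Qed.

Lemma G w : allv pp w -> forall O : {set X},
  (forall u, u \in O -> u \notin leaves w) ->
  forall x x', x \in leaves w -> x' \in leaves w -> relm P O x x'.
Proof.
elim: w => [z|l IHl r IHr] /=.
  by move=> _ O _ x x'; rewrite !inE => /eqP -> /eqP ->; apply: rel_refl.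
move=> [ppw [al ar]] O HO x x'.
have [c [d [cl dr S]]] := cd ppw.
have U : uniq (leaves (Node l r)) := ppw.1.
have HOl : forall u, u \in O -> u \notin leaves l.
  by move=> u /HO; rewrite mem_cat negb_or => /andP[].
have HOr : forall u, u \in O -> u \notin leaves r.
  by move=> u /HO; rewrite mem_cat negb_or => /andP[].
have ncd := rel_cd U cl dr S HO.
have chain : forall y y', y \in leaves l -> y' \in leaves r -> relm P O y y'.
  move=> y y' yl y'r.
  apply: (rel_trans (y := c)); first exact: IHl.
  - apply: (rel_trans (y := d)) => //; first exact: IHr.
    + exact: notin_of HOl cl.
    + exact: notin_of HOr dr.
    + exact: notin_of HOr y'r.
  - exact: notin_of HOl yl.
  - exact: notin_of HOl cl.
  - exact: notin_of HOr y'r.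
rewrite !mem_cat => /orP[xl|xr] /orP[x'l|x'r].
- exact: IHl.
- exact: chain.
- exact/rel_sym/chain.
- exact: IHr.
Qed.

Lemma Fsym l r a b (Y : {set X}) : allv pp (Node l r) ->
  a \in leaves l -> b \in leaves r -> a \in Y -> b \in Y ->
  (forall u, u \in Y -> u \in leaves (Node l r) -> (u == a) || (u == b)) ->
  sym_in P Y a b.
Proof.
move=> [ppw [al ar]] al' br aY bY HY.
have [c [d [cl dr S]]] := cd ppw.
have U : uniq (leaves (Node l r)) := ppw.1.
have ab := uniq_cat_neq U al' br.
have cd' := uniq_cat_neq U cl dr.
have ad := uniq_cat_neq U al' dr.
have cb := uniq_cat_neq U cl br.
have cw : c \in leaves (Node l r) by rewrite /= mem_cat cl.
have dw : d \in leaves (Node l r) by rewrite /= mem_cat dr orbT.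
have aw : a \in leaves (Node l r) by rewrite /= mem_cat al'.
have bw : b \in leaves (Node l r) by rewrite /= mem_cat br orbT.
move: HY S cw dw aw bw U; set w := Node l r => HY S cw dw aw bw U.
set O := [set u in Y | u \notin leaves w].
have HO : forall u, u \in O -> u \notin leaves w by move=> u; rewrite inE => /andP[].
have HOl : forall u, u \in O -> u \notin leaves l.
  by move=> u /HO; rewrite /w /= mem_cat negb_or => /andP[].
have HOr : forall u, u \in O -> u \notin leaves r.
  by move=> u /HO; rewrite /w /= mem_cat negb_or => /andP[].
have EY : Y = O :|: [set a] :|: [set b].
  apply/setP => u; rewrite !inE; case: (boolP (u \in leaves w)) => uw /=.
    rewrite andbF /=; apply/idP/idP => [uY|]; first exact: HY.
    by case/orP => /eqP ->.
  rewrite andbT; apply/idP/idP => [-> //|]; case/orP => [/orP[//|/eqP e]|/eqP e].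
    by move: uw; rewrite e aw.
  by move: uw; rewrite e bw.
clearbody O.
have cO := notin_of HO cw; have dO := notin_of HO dw.
have h1 : forall i, marg P (O :|: [set c] :|: [set d]) (swap_idx i c d) =
                    marg P (O :|: [set c] :|: [set d]) i.
  apply: (push (Z1 := ~: desc w :|: [set c; d]) (Z2 := ~: desc w :|: [set c; d])) => //.
  - apply/subsetP => u; rewrite /desc !inE => /orP[/orP[/HO -> //|/eqP ->]|/eqP ->].
      by rewrite eqxx ?orbT.
    by rewrite eqxx ?orbT.
  - by apply: trp_mem => [|| //]; rewrite !inE ?eqxx ?orbT.
  - by apply: trp_mem => [|| //]; rewrite !inE ?eqxx ?orbT.
have dl : d \notin leaves l.
  by apply/negP => dl; move: (uniq_cat_neq U dl dr); rewrite eqxx.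
have al2 : a \notin leaves r.
  by apply/negP => ar'; move: (uniq_cat_neq U al' ar'); rewrite eqxx.
have h2 : relm P (O :|: [set d]) c a.
  apply: (G al) => // u; rewrite !inE => /orP[/HOl //|/eqP -> //].
have h3 : relm P (O :|: [set a]) d b.
  apply: (G ar) => // u; rewrite !inE => /orP[/HOr //|/eqP -> //].
rewrite EY => i.
rewrite -!h3 (setUAC O [set a] [set d]) -!h2 (setUAC O [set d] [set c]).
rewrite -[in RHS]h1; apply: marg_ext => u; rewrite !swapE.
rewrite !inE => /orP[/orP[uO|/eqP ->]|/eqP ->].
- have ua : u != a by apply/eqP => e; move: (HO u uO); rewrite e aw.
  have ub : u != b by apply/eqP => e; move: (HO u uO); rewrite e bw.
  have uc : u != c by apply/eqP => e; move: (HO u uO); rewrite e cw.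
  have ud : u != d by apply/eqP => e; move: (HO u uO); rewrite e dw.
  by rewrite !trN.
- have da : d != a by rewrite eq_sym.
  have dc : d != c by rewrite eq_sym.
  by rewrite !trL (trN ad ab) (trN dc da) !trL.
- have da : d != a by rewrite eq_sym.
  have dc : d != c by rewrite eq_sym.
  by rewrite (trN dc da) trL trR trR trL (trN ad ab).
Qed.
End T.

Section C.
Variables (X : finType).
Implicit Types (t w v : tree X) (Y : {set X}).

Lemma restrict_leaves Y t : match restrict Y t with
  | Some t' => leaves t' = [seq x <- leaves t | x \in Y]
  | None => [seq x <- leaves t | x \in Y] = [::] end.
Proof.
elim: t => [z|l IHl r IHr] /=; first by case: (z \in Y).
rewrite filter_cat.
case: (restrict Y l) IHl => [l'|] Hl; case: (restrict Y r) IHr => [r'|] Hr /=;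
  by rewrite ?Hl ?Hr ?cats0.
Qed.

Lemma allv_sub (p : tree X -> Prop) t v : allv p t -> exv (fun w => w = v) t -> p v.
Proof.
elim: t => [z|l IHl r IHr] /=.
  by move=> [pz _] [<-|].
by move=> [pt [al ar]] [<-|[/(IHl al)|/(IHr ar)]].
Qed.

Lemma allv_intro (p : tree X -> Prop) t :
  (forall v, exv (fun w => w = v) t -> p v) -> allv p t.
Proof.
elim: t => [z|l IHl r IHr] /= H; first by split => //; apply: H; left.
split; first by apply: H; left.
split; [apply: IHl | apply: IHr] => v hv; apply: H; right; [left|right] => //.
Qed.

Lemma allv_and (p q : tree X -> Prop) t : allv p t -> allv q t ->
  allv (fun v => p v /\ q v) t.
Proof.
elim: t => [z|l IHl r IHr] /=; first by move=> [? _] [? _].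
by move=> [? [? ?]] [? [? ?]]; do !split => //; [apply: IHl|apply: IHr].
Qed.

Lemma allv_uniq t : uniq (leaves t) -> allv (fun v => uniq (leaves v)) t.
Proof.
elim: t => [z|l IHl r IHr] /=; first by [].
move=> U; split => //; move: U; rewrite cat_uniq => /and3P[ul _ ur].
by split; [apply: IHl|apply: IHr].
Qed.

Lemma exv_allv (p q : tree X -> Prop) t : allv p t -> exv q t ->
  exists w, allv p w /\ q w.
Proof.
elim: t => [z|l IHl r IHr] /=.
  by move=> H [qz|//]; exists (Leaf z).
move=> H [qt|[ql|qr]]; first by exists (Node l r).
- by apply: IHl => //; case: H => _ [].
- by apply: IHr => //; case: H => _ [].
Qed.

Lemma exv_trans (p q : tree X -> Prop) t : exv p t ->
  (forall w, p w -> exv q w) -> exv q t.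
Proof.
elim: t => [z|l IHl r IHr] /= H G.
  by case: H => [/G|//].
case: H => [/G //|[hl|hr]]; right; [left; exact: IHl|right; exact: IHr].
Qed.

Variables (Y : {set X}) (a b : X).

Definition Q' w := [/\ a \in leaves w, b \in leaves w, a \in Y, b \in Y &
  forall u, u \in Y -> u \in leaves w -> (u == a) || (u == b)].

Definition Q w := match w with
  | Leaf _ => False
  | Node l r => ((a \in leaves l /\ b \in leaves r) \/ (b \in leaves l /\ a \in leaves r))
       /\ Q' w end.

Lemma QQ w : a != b -> Q' w -> exv Q w.
Proof.
move=> ab; elim: w => [z|l IHl r IHr].
  by case; rewrite !inE => /eqP ea /eqP eb; move: ab; rewrite ea eb eqxx.
case=> /=; rewrite !mem_cat => aw bw aY bY HY.
have HYl : forall u, u \in Y -> u \in leaves l -> (u == a) || (u == b).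
  by move=> u uY ul; apply: HY => //; rewrite mem_cat ul.
have HYr : forall u, u \in Y -> u \in leaves r -> (u == a) || (u == b).
  by move=> u uY ur; apply: HY => //; rewrite mem_cat ur orbT.
case/orP: aw => [al|ar]; case/orP: bw => [bl|br].
- by right; left; apply: IHl.
- by left; split; [left|split; rewrite /= ?mem_cat ?al ?br ?orbT].
- by left; split; [right|split; rewrite /= ?mem_cat ?ar ?bl ?orbT].
- by right; right; apply: IHr.
Qed.

Lemma clade_Q' t t' : restrict Y t = Some t' ->
  exv (fun w => perm_eq (leaves w) [:: a; b]) t' -> exv Q' t.
Proof.
have root : forall t t', restrict Y t = Some t' ->
    perm_eq (leaves t') [:: a; b] -> Q' t.
  move=> t0 t0' E /perm_mem pm; have := restrict_leaves Y t0; rewrite E => F.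
  have : a \in leaves t0' by rewrite pm !inE eqxx.
  have : b \in leaves t0' by rewrite pm !inE eqxx orbT.
  rewrite F !mem_filter => /andP[bY bt] /andP[aY at0].
  split => // u uY ut.
  have : u \in leaves t0' by rewrite F mem_filter uY.
  by rewrite pm !inE.
elim: t t' => [z|l IHl r IHr] t' E H.
  move: E H => /=; case: (z \in Y) => // -[<-] /= [|//].
  by move/perm_size.
have R0 := root _ _ E.
move: E H R0 => /=.
case El: (restrict Y l) => [l'|]; case Er: (restrict Y r) => [r'|] // [<-] H R0.
- case: H => [H0|/= [hl|hr]]; first by left; apply: R0.
    by right; left; apply: IHl El hl.
  by right; right; apply: IHr Er hr.
- by right; left; apply: IHl El H.
- by right; right; apply: IHr Er H.
Qed.

End C.

Lemma exv_root (X : Type) (p : tree X -> Prop) w : p w -> exv p w.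
Proof. by case: w => [z|l r] /=; left. Qed.

Lemma up (X : finType) (Y : {set X}) v t w' (p : tree X -> Prop) :
  exv (fun w => w = v) t -> restrict Y v = Some w' -> exv p w' ->
  exists t', restrict Y t = Some t' /\ exv p t'.
Proof.
elim: t => [z|l IHl r IHr] /=.
  by move=> [<-|//] E H; exists w'.
move=> [<-|[hl|hr]] E H; first by exists w'.
- have [l' [El Hl]] := IHl hl E H; rewrite El.
  by case: (restrict Y r) => [r'|]; eexists; split; [reflexivity| |reflexivity|] => //=; right; left.
- have [r' [Er Hr]] := IHr hr E H; rewrite Er.
  by case: (restrict Y l) => [l'|]; eexists; split; [reflexivity| |reflexivity|] => //=; right; right.
Qed.

Unset Implicit Arguments.

Theorem lemma4p2 (R : realFieldType) (X : finType) (k : nat) (t : tree X)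
  (ch : tree X -> X * X) :
  tree_on t -> (2 <= k)%N ->
  allv (fun v => is_internal v -> is_mrca v (ch v).1 (ch v).2) t ->
  forall P : tensor R X k,
    allv (fun v => is_internal v -> S_v P v (ch v).1 (ch v).2) t <-> inL t P.
Proof.
move=> [U Xall] k2 Hm P; split.
- move=> HS Y a b [ab HC].
  have App : allv (pp P ch) t by exact: allv_and (allv_uniq U) (allv_and Hm HS).
  case E: (restrict Y t) HC => [t'|//] HC.
  have hQ' := clade_Q' E HC.
  have hQ : exv (Q Y a b) t by apply: (exv_trans hQ') => w; apply: QQ.
  have [w [Aw Qw]] := exv_allv App hQ.
  case: w Aw Qw => [z _ []|l r Aw [[[al br]|[bl ar]] [aw bw aY bY HY]]].
  + exact: (Fsym Aw al br aY bY HY).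
  + apply: sym_swap; apply: (Fsym Aw bl ar bY aY) => u uY uw; rewrite orbC; exact: HY.
- move=> HL; apply: allv_intro => v sv vi.
  have Uv : uniq (leaves v) := allv_sub (allv_uniq U) sv.
  have [cv [dv Hcd]] := allv_sub Hm sv vi.
  set c := (ch v).1 in cv dv Hcd *; set d := (ch v).2 in cv dv Hcd *.
  have cd : c != d.
    move: vi cv Hcd; case: (v) => //= l r _; rewrite mem_cat => /orP[cl|cr] [H1 H2];
      apply/eqP => e.
      by rewrite -e cl in H1.
    by rewrite -e cr in H2.
  pose Y := ~: desc v :|: [set c; d].
  apply: HL; split => //.
  have := restrict_leaves Y v.
  case Ev: (restrict Y v) => [w'|] F.
    have pw : perm_eq (leaves w') [:: c; d].
      rewrite F; apply: uniq_perm; first exact: filter_uniq.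
        by rewrite /= inE cd.
      move=> u; rewrite mem_filter /Y /desc !inE.
      case: (boolP (u \in leaves v)) => uv /=; first by rewrite andbT.
      apply/esym/negbTE; apply/negP => /orP[/eqP e|/eqP e];
        by move: uv; rewrite e ?cv ?dv.
    have [t' [Et' Ht']] := up sv Ev (exv_root (p := fun w => perm_eq (leaves w) [:: c; d]) pw).
    by rewrite Et'.
  have : c \in [seq x <- leaves v | x \in Y].
    by rewrite mem_filter cv andbT /Y !inE eqxx orbT.
  by rewrite F in_nil.
Qed.
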